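(* There exists $p\in\mathcal{P}$ such that $\mathrm{Stab}_{G^*}(p)=\langle\varphi\rangle$ for some $2n$-cycle $\varphi\in\mathrm{Sym}(I)$.
   Context: Fix $n\ge 2$, $W=\{1,\dots,n\}$, $M=\{n+1,\dots,2n\}$, $I=W\cup M$. Permutations compose right-to-left. A preference profile is a function $p$ on $I$ assigning to each $x\in W$ a linear order $p(x)$ on $M$ and to each $y\in M$ a linear order $p(y)$ on $W$; $\mathcal{P}$ is the set of preference profiles. $G^*=\{\varphi\in\mathrm{Sym}(I):\{\varphi(W),\varphi(M)\}=\{W,M\}\}$. For a linear order $R$ on $X\subseteq I$ and $\varphi\in\mathrm{Sym}(I)$, $\varphi R$ is the relation on $\varphi(X)$ with $(a,b)\in\varphi R$ iff $(\varphi^{-1}(a),\varphi^{-1}(b))\in R$. For $\varphi\in G^*$, $p^\varphi(z)=\varphi\,p(\varphi^{-1}(z))$, and $\mathrm{Stab}_{G^*}(p)=\{\varphi\in G^*:p^\varphi=p\}$. *)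

(* Defs.v *)
From mathcomp Require Import all_boot all_fingroup.
Set Implicit Arguments. Unset Strict Implicit. Unset Printing Implicit Defensive.

(* Agents are I = 'I_(2n); W = {0,...,n-1} (paper: 1..n),
   M = {n,...,2n-1} (paper: n+1..2n). *)
Definition I (n : nat) := 'I_(2 * n).
Definition W (n : nat) : {set I n} := [set i : I n | i < n].
Definition M (n : nat) : {set I n} := [set i : I n | n <= i].

Definition lin_order (T : finType) (X : {set T}) (R : rel T) : Prop :=
  [/\ (forall a b, R a b -> (a \in X) && (b \in X)),
      (forall a, ~~ R a a),
      (forall a b c, R a b -> R b c -> R a c) &
      (forall a b, a \in X -> b \in X -> a != b -> R a b || R b a)].

Definition profile_fun (n : nat) := I n -> rel (I n).

Definition is_profile (n : nat) (p : profile_fun n) : Prop :=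
  (forall x, x \in W n -> lin_order (M n) (p x)) /\
  (forall y, y \in M n -> lin_order (W n) (p y)).

Definition Gstar (n : nat) : {set {perm I n}} :=
  [set phi : {perm I n} |
     ((phi @: W n == W n) && (phi @: M n == M n)) ||
     ((phi @: W n == M n) && (phi @: M n == W n))].

(* p^phi (z) = phi p(phi^-1 z), where (a,b) in phi R iff
   (phi^-1 a, phi^-1 b) in R. *)
Definition profile_act (n : nat) (phi : {perm I n}) (p : profile_fun n)
  : profile_fun n :=
  fun z a b => p ((phi^-1)%g z) ((phi^-1)%g a) ((phi^-1)%g b).

Definition Stab (n : nat) (p : profile_fun n) : {set {perm I n}} :=
  [set phi in Gstar n |
     [forall z, [forall a, [forall b, profile_act phi p z a b == p z a b]]]].

Definition is_2n_cycle (n : nat) (phi : {perm I n}) : Prop :=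
  exists x : I n, #|porbit phi x| = 2 * n.

(* Main.v *)
Require Import Defs.
From mathcomp Require Import all_boot all_fingroup.
From mathcomp Require Import zify.
Set Implicit Arguments. Unset Strict Implicit. Unset Printing Implicit Defensive.

Ltac crush := repeat match goal with
 | H : context[if ?b then _ else _] |- _ =>
     lazymatch b with context[if _ then _ else _] => fail | _ => destruct b eqn:? end
 | |- context[if ?b then _ else _] =>
     lazymatch b with context[if _ then _ else _] => fail | _ => destruct b eqn:? end
 end; lia.

Definition side (n : nat) (x : I n) : bool := n <= x.
Definition pos (n : nat) (x : I n) : nat :=
  if n <= x then 2 * (x - n) + 1 else 2 * x.

Lemma pos_lt n (x : I n) : pos x < 2 * n.
Proof. have := ltn_ord x; rewrite /pos => ?; crush. Qed.

Lemma pos_inj n : injective (@pos n).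
Proof.
move=> x y; have := ltn_ord x; have := ltn_ord y; rewrite /pos => ? ? E.
apply/val_inj => /=; move: E; crush.
Qed.

Definition succv (n : nat) (x : nat) : nat :=
  if x < n then x + n else if x == (2 * n).-1 then 0 else x - n + 1.

Lemma succv_lt n (x : I n) : succv n x < 2 * n.
Proof. have := ltn_ord x; rewrite /succv => ?; crush. Qed.

Definition succ n (x : I n) : I n := Ordinal (succv_lt x).

Lemma pos_succ n (x : I n) :
  pos (succ x) = if (pos x).+1 == 2 * n then 0 else (pos x).+1.
Proof.
have := ltn_ord x; rewrite /pos /succ /succv /= => ?; crush.
Qed.

Lemma side_succ n (x : I n) : side (succ x) = ~~ side x.
Proof.
have := ltn_ord x; rewrite /side /succ /succv /= => ?.
repeat (case: ifP => ?); apply/idP/idP; lia.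
Qed.

Lemma succ_inj n : injective (@succ n).
Proof.
move=> x y E; apply: pos_inj; have := congr1 (@pos n) E; rewrite !pos_succ.
have := pos_lt x; have := pos_lt y => ? ?; crush.
Qed.

Definition phi n : {perm I n} := perm (@succ_inj n).

Definition d n (z a : I n) : nat :=
  if pos z <= pos a then pos a - pos z else pos a + 2 * n - pos z.

Definition opp n (z a : I n) : bool := side z != side a.

Definition prof n : profile_fun n :=
  fun z a b => [&& opp z a, opp z b & d z a < d z b].

Lemma d_inj n (z a b : I n) : d z a = d z b -> a = b.
Proof.
move=> E; apply: pos_inj; move: E; rewrite /d.
have := pos_lt a; have := pos_lt b; have := pos_lt z => ? ? ? ?; crush.
Qed.

Lemma d_lt n (z a : I n) : d z a < 2 * n.
Proof.
rewrite /d; have := pos_lt a; have := pos_lt z => ? ?; crush.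
Qed.

Lemma d_succ n (z a : I n) : d (succ z) (succ a) = d z a.
Proof.
rewrite /d !pos_succ; have := pos_lt a; have := pos_lt z => ? ?; crush.
Qed.

Lemma d_zz n (z : I n) : d z z = 0.
Proof. by rewrite /d leqnn subnn. Qed.

Lemma d_zs n (z : I n) : d z (succ z) = 1.
Proof.
rewrite /d pos_succ; have := pos_lt z => ?; crush.
Qed.

Lemma prof_lin n (z : I n) (X : {set I n}) :
  (forall a, (a \in X) = opp z a) -> lin_order X (prof z).
Proof.
move=> HX; split.
- by move=> a b /and3P [h1 h2 _]; rewrite !HX h1 h2.
- by move=> a; rewrite /prof ltnn !andbF.
- move=> a b c /and3P [h1 h2 h3] /and3P [h4 h5 h6].
  by rewrite /prof h1 h5 (ltn_trans h3 h6).
- move=> a b; rewrite !HX => ha hb nab; rewrite /prof ha hb /=.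
  case: (ltngtP (d z a) (d z b)) => // /d_inj E.
  by rewrite E eqxx in nab.
Qed.

Lemma prof_is n : is_profile (@prof n).
Proof.
split=> x Hx; apply: prof_lin => a; move: Hx; rewrite /opp /side /M /W !inE;
  case: (leqP n x) => ?; case: (leqP n a) => ? //= ?; lia.
Qed.

Lemma phiE n (x : I n) : phi n x = succ x.
Proof. by rewrite permE. Qed.

Lemma phiX n k (x : I n) : (phi n ^+ k)%g x = iter k (@succ n) x.
Proof. by rewrite permX; apply: eq_iter; exact: phiE. Qed.

Lemma opp_succ n (z a : I n) : opp (succ z) (succ a) = opp z a.
Proof. by rewrite /opp !side_succ; case: (side z); case: (side a). Qed.

Lemma prof_succ n (z a b : I n) :
  prof (succ z) (succ a) (succ b) = prof z a b.
Proof. by rewrite /prof !opp_succ !d_succ. Qed.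

Definition inv_prof n (s : {perm I n}) :=
  forall z a b, prof (s z) (s a) (s b) = prof z a b.

Lemma inv_iter n k : inv_prof (phi n ^+ k)%g.
Proof.
move=> z a b; rewrite !phiX; elim: k => //= k IH.
by rewrite prof_succ.
Qed.

Lemma side_X n k (x : I n) : side ((phi n ^+ k)%g x) = side x (+) odd k.
Proof.
rewrite phiX; elim: k => /= [|k IH]; first by rewrite addbF.
by rewrite side_succ IH; case: (side x); case: (odd k).
Qed.

Lemma imset_side n (s : {perm I n}) t b :
  (forall x, side (s x) = side x (+) t) ->
  s @: [set x | side x == b] = [set x | side x == b (+) t].
Proof.
move=> H; apply/setP => y; rewrite inE; apply/imsetP/idP.
- by case=> x; rewrite inE => /eqP <- ->; rewrite H.
- move=> Hy; exists (s^-1 y)%g; last by rewrite permKV.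
  move: Hy; rewrite inE -{1}(permKV s y) H.
  clear H; by case: (side _); case: t; case: b.
Qed.

Lemma W_side n : W n = [set x | side x == false].
Proof. by apply/setP => x; rewrite !inE /side ltnNge; case: (n <= x). Qed.

Lemma M_side n : M n = [set x | side x == true].
Proof. by apply/setP => x; rewrite !inE /side eqb_id. Qed.

Lemma Gstar_side n (s : {perm I n}) t :
  (forall x, side (s x) = side x (+) t) -> s \in Gstar n.
Proof.
move=> H; rewrite inE W_side M_side !(imset_side _ H).
clear H; case: t; rewrite /= ?eqxx ?orbT //.
Qed.

Lemma side_map n (s : {perm I n}) b c :
  s @: [set x | side x == b] = [set x | side x == c] ->
  forall x, side x == b -> side (s x) == c.
Proof.
move=> E x hx; have: s x \in s @: [set x | side x == b].
  by apply: imset_f; rewrite inE.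
by rewrite E inE.
Qed.

Lemma Gstar_side_inv n (s : {perm I n}) :
  s \in Gstar n -> exists t, forall x, side (s x) = side x (+) t.
Proof.
rewrite inE W_side M_side => /orP [/andP [/eqP h1 /eqP h2] | /andP [/eqP h1 /eqP h2]].
- exists false => x; case Sx: (side x).
  + by have := side_map h2 (x:=x); rewrite Sx eqxx => /(_ isT) /eqP ->.
  + by have := side_map h1 (x:=x); rewrite Sx eqxx => /(_ isT) /eqP ->.
- exists true => x; case Sx: (side x).
  + by have := side_map h2 (x:=x); rewrite Sx eqxx => /(_ isT) /eqP ->.
  + by have := side_map h1 (x:=x); rewrite Sx eqxx => /(_ isT) /eqP ->.
Qed.

Lemma Stab_of n (s : {perm I n}) :
  s \in Gstar n -> inv_prof s -> s \in Stab (@prof n).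
Proof.
move=> G Hi; rewrite inE G /=; apply/forallP => z; apply/forallP => a.
apply/forallP => b; apply/eqP.
by rewrite /profile_act -{2}(permKV s z) -{2}(permKV s a) -{2}(permKV s b) Hi.
Qed.

Lemma Stab_to n (s : {perm I n}) :
  s \in Stab (@prof n) -> s \in Gstar n /\ inv_prof s.
Proof.
rewrite inE => /andP [G /forallP H]; split=> // z a b.
have := H (s z) => /forallP /(_ (s a)) /forallP /(_ (s b)) /eqP.
by rewrite /profile_act !permK => ->.
Qed.

Definition top n (z a : I n) :=
  opp z a /\ forall b, b != a -> opp z b -> prof z a b.

Lemma opp_zz n (z : I n) : opp z z = false.
Proof. by rewrite /opp eqxx. Qed.

Lemma top_succ n (z : I n) : top z (succ z).
Proof.
have oz : opp z (succ z) by rewrite /opp side_succ; case: (side z).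
split=> // b nb ob; rewrite /prof oz ob d_zs /=.
case E: (d z b) => [|[|k]] //.
- by move: E; rewrite -(d_zz z) => /d_inj E; rewrite -E opp_zz in ob.
- by move: E; rewrite -(d_zs z) => /d_inj E; rewrite E eqxx in nb.
Qed.

Lemma top_uniq n (z a : I n) : top z a -> a = succ z.
Proof.
case=> oa H; apply/eqP; apply/negP => /negP na.
have := H (succ z); rewrite eq_sym => /(_ na).
have oz : opp z (succ z) by rewrite /opp side_succ; case: (side z).
move/(_ oz) => /and3P [_ _]; rewrite d_zs ltnS leqn0 -(d_zz z) => /eqP /d_inj E.
by rewrite E opp_zz in oa.
Qed.

Lemma top_inv n (s : {perm I n}) t :
  (forall x, side (s x) = side x (+) t) -> inv_prof s ->
  forall z a, top z a -> top (s z) (s a).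
Proof.
move=> G Hi.
have os : forall x y, opp (s x) (s y) = opp x y.
  by move=> x y; rewrite /opp !G; case: (side x); case: (side y); case: (t).
move=> z a [oa H]; split; first by rewrite os.
move=> b; rewrite -(permKV s b) os => nb ob; rewrite Hi; apply: H => //.
by apply: contra nb => /eqP ->.
Qed.

Lemma pos_iter n (x0 : I n) : pos x0 = 0 ->
  forall j, j < 2 * n -> pos (iter j (@succ n) x0) = j.
Proof.
move=> p0; elim=> // j IH hj /=; rewrite pos_succ IH; last by lia.
by case: eqP => //; lia.
Qed.

Lemma iter_pos n (x0 : I n) : pos x0 = 0 ->
  forall x, x = iter (pos x) (@succ n) x0.
Proof. by move=> p0 x; apply: pos_inj; rewrite pos_iter // pos_lt. Qed.

Lemma comm_iter n (s : {perm I n}) :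
  (forall z, s (succ z) = succ (s z)) ->
  forall j y, s (iter j (@succ n) y) = iter j (@succ n) (s y).
Proof. by move=> C; elim=> //= j IH y; rewrite C IH. Qed.

Theorem proposition16 (n : nat) (hn : 2 <= n) :
  exists p : profile_fun n, is_profile p /\
    exists phi : {perm I n}, is_2n_cycle phi /\ Stab p = <[phi]>%g.
Proof.
have n0 : 0 < 2 * n by lia.
pose x0 : I n := Ordinal n0.
have p0 : pos x0 = 0 by rewrite /pos /=; case: leqP => //; lia.
exists (@prof n); split; first exact: prof_is.
exists (phi n); split.
  exists x0.
  have -> : porbit (phi n) x0 = [set: I n].
    apply/setP => x; rewrite inE (iter_pos p0 x) -phiX; exact: mem_porbit.
  by rewrite cardsT card_ord.
apply/setP => s; apply/idP/idP.
- move/Stab_to => [G Hi]; have [t Ht] := Gstar_side_inv G.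
  have C : forall z, s (succ z) = succ (s z).
    by move=> z; apply: top_uniq; apply: (top_inv Ht Hi); apply: top_succ.
  have -> : s = (phi n ^+ (pos (s x0)))%g; last exact: mem_cycle.
  apply/permP => x; rewrite phiX.
  have E := iter_pos p0 x.
  rewrite {1}E comm_iter //.
  have E2 := iter_pos p0 (s x0).
  by rewrite {1}E2 {2}E -!iterD addnC.
- case/cycleP => k ->; apply: Stab_of; last exact: inv_iter.
  by apply: (@Gstar_side _ _ (odd k)) => x; exact: side_X.
Qed.
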